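(* Let $(C_i\subseteq\mathbb F_q^{n_i})_{i\in[t]}$, $t\ge2$, be classical codes with product-expansion $\rho>0$, and suppose $C_t\neq\mathbb F_q^{n_t}$. Then the subcollection $(C_i)_{i\in[t-1]}$ has product-expansion at least $\rho$.
   Context: Product-expansion: For codes $C_1\subseteq\mathbb F_q^{n_1},\dots,C_t\subseteq\mathbb F_q^{n_t}$, identify $\mathbb F_q^{n_1}\otimes\cdots\otimes\mathbb F_q^{n_t}$ with $t$-dimensional arrays; a direction-$i$ column is the vector in $\mathbb F_q^{n_i}$ obtained by fixing all coordinates except the $i$-th. $C^{(i)}$ is the space of arrays all of whose direction-$i$ columns lie in $C_i$, and $C_1\boxplus\cdots\boxplus C_t=C^{(1)}+\cdots+C^{(t)}$. $|c|$ is the number of nonzero entries of an array, $|c|_i$ its number of nonzero direction-$i$ columns. The product-expansion of $(C_i)_{i\in[t]}$ is the largest $\rho\ge0$ such that every $c\in C_1\boxplus\cdots\boxplus C_t$ has a decomposition $c=c_1+\cdots+c_t$ with $c_i\in C^{(i)}$ and $|c|\ge\rho\sum_in_i|c_i|_i$. *)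

(* Defs.v *)
From HB Require Import structures.
From mathcomp Require Import all_boot all_order all_algebra.
From mathcomp Require Import reals.
Set Implicit Arguments. Unset Strict Implicit. Unset Printing Implicit Defensive.
Import Order.TTheory GRing.Theory Num.Theory.
Local Open Scope ring_scope.

Section ProductExpansion.
Variables (F : finFieldType) (t : nat) (n : 'I_t -> nat).

Definition pos := {dffun forall i : 'I_t, 'I_(n i)}.
(* arrays = elements of F^{n_1} (x) ... (x) F^{n_t} *)
Definition arr := {ffun pos -> F}.

Definition setc (p : pos) (i : 'I_t) (k : 'I_(n i)) : pos :=
  finfun (dfwith (fun j => p j) k).
Arguments setc p i k : clear implicits.

Definition col (c : arr) (i : 'I_t) (p : pos) : 'rV[F]_(n i) :=
  \row_(k < n i) c (setc p i k).

Definition line (i : 'I_t) (p : pos) : {set pos} :=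
  [set q : pos | [forall j : 'I_t, (j != i) ==> (q j == p j)]].

Definition wt (c : arr) : nat := #|[set p : pos | c p != 0]|.

Definition wt_dir (i : 'I_t) (c : arr) : nat :=
  #|[set line i p | p in [set p : pos | c p != 0]]|.

Definition inCdir (C : forall i : 'I_t, {vspace 'rV[F]_(n i)}) (i : 'I_t)
  (c : arr) : Prop := forall p : pos, col c i p \in C i.

Definition in_boxplus (C : forall i : 'I_t, {vspace 'rV[F]_(n i)}) (c : arr)
  : Prop :=
  exists cs : 'I_t -> arr, (forall i, inCdir C i (cs i)) /\ c = \sum_(i < t) cs i.

Definition pe_holds (R : realType) (C : forall i : 'I_t, {vspace 'rV[F]_(n i)})
  (rho : R) : Prop :=
  forall c : arr, in_boxplus C c ->
    exists cs : 'I_t -> arr,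
      [/\ forall i, inCdir C i (cs i),
          c = \sum_(i < t) cs i &
          rho * (\sum_(i < t) ((n i)%:R * (wt_dir i (cs i))%:R)) <= (wt c)%:R].

Definition is_product_expansion (R : realType)
  (C : forall i : 'I_t, {vspace 'rV[F]_(n i)}) (rho : R) : Prop :=
  [/\ 0 <= rho, pe_holds C rho &
      forall rho' : R, 0 <= rho' -> pe_holds C rho' -> rho' <= rho].

End ProductExpansion.

(* Main.v *)
Require Import Defs.
From HB Require Import structures.
From mathcomp Require Import all_boot all_order all_algebra.
From mathcomp Require Import reals.
From mathcomp Require Import ring.
Import Order.TTheory GRing.Theory Num.Theory.
Local Open Scope ring_scope.
Lemma functional (F : finFieldType) (m : nat) (U : {vspace 'rV[F]_m}) : U != fullv ->
  exists phi : 'I_m -> F, exists k0, phi k0 = 1 /\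
    forall x, x \in U -> \sum_k phi k * x 0 k = 0.
Proof.
move=> hU.
have [w wU] : exists w, w \notin U.
  case: (boolP [exists w, w \notin U]) => [/existsP//|/existsPn hw].
  by move/eqP: hU; case; apply/vspaceP => v; rewrite memvf; move: (hw v); rewrite negbK.
pose h (x : 'rV[F]_m) (j : 'I_m) := (x - projv U x) 0 j.
have hlin : forall x j, h x j = \sum_k x 0 k * h 'e_k j.
  move=> x j; rewrite /h.
  rewrite {1 2}[x]row_sum_delta.
  rewrite linear_sum /= -sumrB summxE; apply: eq_bigr => k _.
  by rewrite linearZ /= -scalerBr mxE.
have [j hj] : exists j, h w j != 0.
  case: (boolP [exists j, h w j != 0]) => [/existsP//|/existsPn hw].
  case/negP: wU; rewrite -[w](subrK (projv U w)); apply: memvD; last exact: memv_proj.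
  have -> : w - projv U w = 0 by apply/rowP => i; rewrite [RHS]mxE; apply/eqP; move: (hw i); rewrite negbK.
  exact: mem0v.
have [k0 hk0] : exists k0, h 'e_k0 j != 0.
  case: (boolP [exists k, h 'e_k j != 0]) => [/existsP//|/existsPn hk].
  move: hj; rewrite hlin big1 ?eqxx // => k _.
  by move: (hk k); rewrite negbK => /eqP ->; rewrite mulr0.
exists (fun k => h 'e_k j / h 'e_k0 j), k0; split; first by rewrite divff.
move=> x xU.
have hx : h x j = 0 by rewrite /h projv_id // subrr mxE.
transitivity (h x j / h 'e_k0 j); last by rewrite hx mul0r.
rewrite [h x j]hlin mulr_suml; apply: eq_bigr => k _; ring. Qed.

Section Helpers.
Set Implicit Arguments. Unset Strict Implicit. Unset Printing Implicit Defensive.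

Lemma setcE (t : nat) (n : 'I_t -> nat) (p : pos n) i (k : 'I_(n i)) j :
  val (setc p k j) = if j == i then val k else val (p j).
Proof.
rewrite /setc ffunE; case: dfwithP => [|j' hij]; first by rewrite eqxx.
by rewrite eq_sym (negbTE hij).
Qed.

Section Pos.
Variables (t : nat) (n : 'I_t.+1 -> nat).
Local Notation wd := (widen_ord (leqnSn t)).
Definition nS (j : 'I_t) := n (wd j).
Local Notation m := (n ord_max).

Lemma wd_lift (j : 'I_t) : wd j = lift ord_max j.
Proof. by apply: val_inj; rewrite /= /bump leqNgt ltn_ord. Qed.

Lemma ord_split (i : 'I_t.+1) : (exists j, i = wd j) \/ i = ord_max.
Proof. by case: (unliftP ord_max i) => [j ->|->]; [left; exists j; rewrite wd_lift | right]. Qed.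

Lemma wd_neq_max (j : 'I_t) : (wd j == ord_max) = false.
Proof. by apply/negbTE; rewrite -val_eqE /= neq_ltn ltn_ord. Qed.

Lemma wd_eq (j j' : 'I_t) : (wd j == wd j') = (j == j').
Proof. by rewrite -!val_eqE. Qed.

Definition extv (p : pos nS) (k : 'I_m) (i : 'I_t.+1) : 'I_(n i) :=
  match unliftP ord_max i with
  | UnliftSome j e => cast_ord (congr1 n (etrans (wd_lift j) (esym e))) (p j)
  | UnliftNone e => cast_ord (congr1 n (esym e)) k end.

Definition ext (p : pos nS) (k : 'I_m) : pos n := finfun (extv p k).

Lemma ext_wd p k j : val (ext p k (wd j)) = val (p j).
Proof.
rewrite ffunE /extv; case: (unliftP ord_max _) => [j' e|e] /=.
  by have -> : j' = j by apply: val_inj; move: (congr1 val e); rewrite /= /bump leqNgt ltn_ord.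
by move/(congr1 val): e => /= e; move: (ltn_ord j); rewrite e ltnn.
Qed.

Lemma ext_max p k : val (ext p k ord_max) = val k.
Proof.
rewrite ffunE /extv; case: (unliftP ord_max _) => [j' e|e] //=.
by move/(congr1 val): e => /=; rewrite /bump leqNgt ltn_ord /= => e; move: (ltn_ord j'); rewrite {2}e add0n ltnn.
Qed.

Definition res (q : pos n) : pos nS := finfun (fun j : 'I_t => q (wd j)).

Lemma resE q j : res q j = q (wd j).
Proof. by rewrite ffunE. Qed.

Lemma res_ext p k : res (ext p k) = p.
Proof. by apply/ffunP => j; apply: val_inj; rewrite resE ext_wd. Qed.

Lemma ext_res q : ext (res q) (q ord_max) = q.
Proof.
apply/ffunP => i; apply: val_inj; case: (ord_split i) => [[j ->]|->].
  by rewrite ext_wd resE.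
by rewrite ext_max.
Qed.

Lemma setc_ext_max p k l : setc (ext p k) (l : 'I_(n ord_max)) = ext p l.
Proof.
apply/ffunP => i; apply: val_inj; rewrite setcE; case: (ord_split i) => [[j ->]|->].
  by rewrite wd_neq_max !ext_wd.
by rewrite eqxx ext_max.
Qed.

Lemma setc_ext_wd p k j (l : 'I_(nS j)) :
  setc (ext p k) (l : 'I_(n (wd j))) = ext (setc p l) k.
Proof.
apply/ffunP => i; apply: val_inj; rewrite setcE; case: (ord_split i) => [[j' ->]|->].
  by rewrite !ext_wd setcE wd_eq.
by rewrite eq_sym wd_neq_max !ext_max.
Qed.

Lemma res_setc q j (l : 'I_(nS j)) :
  res (setc q (l : 'I_(n (wd j)))) = setc (res q) l.
Proof.
by apply/ffunP => j'; apply: val_inj; rewrite resE !setcE resE (@setcE _ n q (wd j) l) wd_eq.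
Qed.

Lemma setc_wd_max q j (l : 'I_(nS j)) :
  setc q (l : 'I_(n (wd j))) ord_max = q ord_max.
Proof. by apply: val_inj; rewrite setcE eq_sym wd_neq_max. Qed.

Lemma ext_max_eq p k k' : (ext p k ord_max == k') = (k == k').
Proof. by rewrite -val_eqE ext_max val_eqE. Qed.

Lemma res_line q j : res @: line (wd j) q = line j (res q).
Proof.
apply/setP => p'; apply/imsetP/idP.
  case=> r; rewrite !inE => /forallP hr ->; apply/forallP => j'; apply/implyP => hj.
  by rewrite !resE; move/implyP: (hr (wd j')); apply; rewrite wd_eq.
rewrite inE => /forallP hp; exists (ext p' (q ord_max)); last by rewrite res_ext.
rewrite inE; apply/forallP => i; apply/implyP => hi.
case: (ord_split i) hi => [[j' ->]|->] hi.
  rewrite -val_eqE ext_wd; move/implyP: (hp j'); rewrite -wd_eq => /(_ hi).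
  by rewrite -val_eqE resE.
by rewrite -val_eqE ext_max.
Qed.

End Pos.


Section Arr.
Variables (F : finFieldType) (t : nat) (n : 'I_t.+1 -> nat).
Variable (C : forall i : 'I_t.+1, {vspace 'rV[F]_(n i)}).
Local Notation wd := (widen_ord (leqnSn t)).
Local Notation m := (n ord_max).
Local Notation nS := (nS n).
Local Notation CS := (fun j : 'I_t => C (wd j)).
Variables (phi : 'I_m -> F) (k0 : 'I_m).

Definition tens (d : arr F nS) : arr F n :=
  [ffun q : pos n => if q ord_max == k0 then d (res q) else 0].
Definition proj (e : arr F n) : arr F nS :=
  [ffun p : pos nS => \sum_k phi k * e (ext p k)].

Lemma wt_tens d : wt (tens d) = wt d.
Proof.
rewrite /wt.
have -> : [set q | tens d q != 0] = (fun p => ext p k0) @: [set p | d p != 0].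
  apply/setP => q; rewrite inE ffunE; apply/idP/imsetP.
    case: ifP => [/eqP hq hd|_]; last by rewrite eqxx.
    exists (res q); first by rewrite inE.
    by rewrite -hq ext_res.
  by case=> p; rewrite inE => hp ->; rewrite ext_max_eq eqxx res_ext.
apply: card_imset => p p' /(congr1 (@res _ n)); by rewrite !res_ext.
Qed.

Lemma tens_sum (ds : 'I_t -> arr F nS) : tens (\sum_j ds j) = \sum_j tens (ds j).
Proof.
apply/ffunP => q; rewrite /tens sum_ffunE !ffunE (eq_bigr (fun i => if q ord_max == k0 then ds i (res q) else 0)); last by move=> i _; rewrite ffunE.
by case: ifP => _; [rewrite sum_ffunE | rewrite big1].
Qed.

Lemma col_tens d j q : Defs.col (tens d) (wd j) q =
  if q ord_max == k0 then Defs.col d j (res q) else 0.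
Proof.
apply/rowP => l; rewrite !mxE ffunE setc_wd_max.
case: ifP => _; last by rewrite mxE.
by rewrite mxE res_setc.
Qed.

Lemma inC_tens j d : inCdir CS j d -> inCdir C (wd j) (tens d).
Proof. by move=> h q; rewrite col_tens; case: ifP => _; [apply: h | apply: mem0v]. Qed.

Lemma inC_zero i : inCdir C i 0.
Proof.
move=> q; have -> : Defs.col (0 : arr F n) i q = 0 by apply/rowP => l; rewrite !mxE ffunE.
exact: mem0v.
Qed.

Lemma proj_sum (es : 'I_t.+1 -> arr F n) : proj (\sum_i es i) = \sum_i proj (es i).
Proof.
apply/ffunP => p; rewrite sum_ffunE ffunE.
rewrite (eq_bigr (fun i => \sum_k phi k * es i (ext p k))); last by move=> i _; rewrite ffunE.
rewrite exchange_big; apply: eq_bigr => k _; rewrite sum_ffunE mulr_sumr.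
done.
Qed.

Lemma proj_tens c : phi k0 = 1 -> proj (tens c) = c.
Proof.
move=> h1; apply/ffunP => p; rewrite ffunE (bigD1 k0) //= big1 ?addr0.
  by rewrite ffunE ext_max_eq eqxx res_ext h1 mul1r.
by move=> k hk; rewrite ffunE ext_max_eq (negbTE hk) mulr0.
Qed.

Lemma proj_max e : (forall x, x \in C ord_max -> \sum_k phi k * x 0 k = 0) ->
  inCdir C ord_max e -> proj e = 0.
Proof.
move=> hphi he; apply/ffunP => p; rewrite !ffunE.
transitivity (\sum_k phi k * Defs.col e ord_max (ext p k0) 0 k); last exact: hphi. apply: eq_bigr => k _.
by rewrite mxE setc_ext_max.
Qed.

Lemma inC_proj j e : inCdir C (wd j) e -> inCdir CS j (proj e).
Proof.
move=> he p.
have -> : Defs.col (proj e) j p = \sum_k phi k *: Defs.col e (wd j) (ext p k).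
  apply/rowP => l; rewrite !mxE ffunE summxE; apply: eq_bigr => k _.
  by rewrite !mxE setc_ext_wd.
by apply: memv_suml => k _; apply: memvZ; apply: he.
Qed.

Lemma wt_proj j e : (wt_dir j (proj e) <= wt_dir (wd j) e)%N.
Proof.
rewrite /wt_dir.
set S := [set line (wd j) q | q in [set q | e q != 0]].
have h1 : [set line j p | p in [set p | proj e p != 0]] \subset [set (@res t n) @: L | L : {set pos n} in S].
apply/subsetP => L /imsetP [p]; rewrite inE => hp ->.
have [k hk] : exists k, e (ext p k) != 0.
  case: (boolP [exists k, e (ext p k) != 0]) => [/existsP//|/existsPn hk].
  move: hp; rewrite ffunE big1 ?eqxx // => k _.
  by move: (hk k); rewrite negbK => /eqP ->; rewrite mulr0.
apply/imsetP; exists (line (wd j) (ext p k)).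
  by apply/imsetP; exists (ext p k); rewrite ?inE.
by rewrite res_line res_ext.
exact: leq_trans (subset_leq_card h1) (leq_imset_card _ _).
Qed.

End Arr.

End Helpers.

Theorem lemmaA1 (R : realType) (F : finFieldType) (t : nat) (ht : (1 <= t)%N)
  (n : 'I_t.+1 -> nat) (C : forall i : 'I_t.+1, {vspace 'rV[F]_(n i)})
  (rho : R) :
  is_product_expansion C rho -> 0 < rho ->
  C ord_max != fullv ->
  pe_holds (n := fun i : 'I_t => n (widen_ord (leqnSn t) i))
           (fun i : 'I_t => C (widen_ord (leqnSn t) i)) rho.
Proof.
case=> rho0 peB _ _ hC.
have [phi [k0 [h1 hphi]]] := @functional _ _ _ hC.
move=> c [cs [hcs csum]].
pose cs' (i : 'I_t.+1) : arr F n :=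
  if unlift ord_max i is Some j then tens k0 (cs j) else 0.
have hcs' : forall i, inCdir C i (cs' i).
  move=> i; rewrite /cs'; case: (unliftP ord_max i) => [j ->|->].
    by rewrite -wd_lift; apply: inC_tens.
  by apply: inC_zero.
have bp : in_boxplus C (tens k0 c).
  exists cs'; split => //.
  rewrite big_ord_recr /= {2}/cs' unlift_none addr0 csum tens_sum.
  by apply: eq_bigr => j _; rewrite /cs' wd_lift liftK.
have [ds [hds dsum hineq]] := peB (tens k0 c) bp.
exists (fun j => proj phi (ds (widen_ord (leqnSn t) j))); split.
- by move=> j; apply: inC_proj.
- rewrite -[LHS](proj_tens c h1) dsum proj_sum big_ord_recr /=.
  by rewrite (proj_max k0 hphi (hds ord_max)) addr0.
- rewrite wt_tens in hineq; apply: le_trans hineq; apply: ler_wpM2l => //.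
  rewrite big_ord_recr /=; apply: ler_wpDr.
    by apply: mulr_ge0; apply: ler0n.
  apply: ler_sum => j _; apply: ler_wpM2l; first exact: ler0n.
  by rewrite ler_nat; apply: wt_proj.
Qed.
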